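(* Let $F$ be a field of characteristic $\neq 2$ and let $(V,q)$ be the orthogonal direct sum of nondegenerate quadratic spaces $(V_1,q_1)$ and $(V_2,q_2)$, so that $C(V_i,q_i)\subseteq C(V,q)$. Let $t_i\in\Gamma^+(V_i,q_i)$ and suppose there exist $s_i\in\Gamma(V_i,q_i)$ with $s_it_is_i^{-1}=N(t_i)t_i^{-1}$ for $i=1,2$. Let $t=t_1t_2\in\Gamma^+(V,q)$ and $s=s_1s_2$. Then $sts^{-1}=N(t)t^{-1}$.
   Context: $C(V,q)=T(V)/\langle x\otimes x-q(x)\cdot1\rangle=C_0\oplus C_1$ is the Clifford algebra, $\Gamma(V,q)=\{u\in C(V,q)^\times: uVu^{-1}\subseteq V\}$ the Clifford group and $\Gamma^+(V,q)=\Gamma(V,q)\cap C_0(V,q)$. With $\tau$ the anti-involution reversing products of vectors, $N(u)=\tau(u)u\in F^*$ is the norm. *)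

(* Defs.v *)
(* Clifford algebras are not in the library; we characterise
   C(V,q) by its universal property (which determines it up to unique iso). *)
From HB Require Import structures.
From mathcomp Require Import all_boot all_order all_algebra.
Set Implicit Arguments. Unset Strict Implicit. Unset Printing Implicit Defensive.
Import Order.TTheory GRing.Theory.
Local Open Scope ring_scope.

Section Clifford.
Variables (F : fieldType) (V : vectType F).

Definition polar (q : V -> F) (x y : V) : F := q (x + y) - q x - q y.

Definition quad_form (q : V -> F) : Prop :=
  (forall (a : F) (x : V), q (a *: x) = a ^+ 2 * q x) /\
  (forall (a : F) (x y z : V), polar q (a *: x + y) z = a * polar q x z + polar q y z).

Definition nondeg_on (q : V -> F) (W : {vspace V}) : Prop :=
  forall x, x \in W -> (forall y, y \in W -> polar q x y = 0) -> x = 0.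

Definition orth_direct_sum (q : V -> F) (W1 W2 : {vspace V}) : Prop :=
  (W1 + W2 = fullv)%VS /\ (W1 :&: W2 = 0)%VS /\
  (forall x y, x \in W1 -> y \in W2 -> polar q x y = 0).

Definition is_clifford (q : V -> F) (A : algType F) (iota : {linear V -> A}) : Prop :=
  (forall x, iota x * iota x = (q x)%:A) /\
  forall (B : algType F) (f : {linear V -> B}),
    (forall x, f x * f x = (q x)%:A) ->
    exists g : {lrmorphism A -> B},
      (forall x, g (iota x) = f x) /\
      (forall h : {lrmorphism A -> B}, (forall x, h (iota x) = f x) -> h =1 g).

Definition is_reversal (A : algType F) (iota : {linear V -> A}) (tau : A -> A) : Prop :=
  [/\ linear tau, tau 1 = 1,
      (forall u v, tau (u * v) = tau v * tau u),
      (forall x, tau (iota x) = iota x) & (forall u, tau (tau u) = u)].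

Section Sub.
Variables (A : algType F) (iota : {linear V -> A}) (W : {vspace V}).

(* C(W, q|_W), viewed inside C(V,q): the subalgebra generated by iota(W) *)
Inductive cl_sub : A -> Prop :=
| cs1 : cl_sub 1
| csV w : w \in W -> cl_sub (iota w)
| csD u v : cl_sub u -> cl_sub v -> cl_sub (u + v)
| csZ (a : F) u : cl_sub u -> cl_sub (a *: u)
| csM u v : cl_sub u -> cl_sub v -> cl_sub (u * v).

(* C_0(W, q|_W): span of products of an even number of vectors of W *)
Inductive cl_even : A -> Prop :=
| ce1 : cl_even 1
| ce2 w1 w2 : w1 \in W -> w2 \in W -> cl_even (iota w1 * iota w2)
| ceD u v : cl_even u -> cl_even v -> cl_even (u + v)
| ceZ (a : F) u : cl_even u -> cl_even (a *: u)
| ceM u v : cl_even u -> cl_even v -> cl_even (u * v).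
End Sub.

Section Group.
Variables (A : unitAlgType F) (iota : {linear V -> A}) (W : {vspace V}).

Definition clifford_group (u : A) : Prop :=
  [/\ cl_sub iota W u, u \is a GRing.unit, cl_sub iota W u^-1 &
      forall x, x \in W -> exists2 y, y \in W & u * iota x * u^-1 = iota y].

Definition clifford_group_plus (u : A) : Prop :=
  clifford_group u /\ cl_even iota W u.
End Group.

Definition cl_norm (A : algType F) (tau : A -> A) (u : A) : A := tau u * u.

End Clifford.

(* Main.v *)
Require Import Defs.
From HB Require Import structures.
From mathcomp Require Import all_boot all_order all_algebra.
Import GRing.Theory.
Set Implicit Arguments. Unset Strict Implicit.
Local Open Scope ring_scope.

Lemma anticomm_orth (F : fieldType) (V : vectType F) (q : V -> F) (A : unitAlgType F)
  (iota : {linear V -> A}) x y : (forall z, iota z * iota z = (q z)%:A) ->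
  polar q x y = 0 -> iota x * iota y = - (iota y * iota x).
Proof.
move=> Hsq Hp; apply/eqP; rewrite -subr_eq0 opprK.
have E : iota x * iota y + iota y * iota x = (polar q x y)%:A.
  rewrite /polar !scalerBl -!Hsq raddfD /= mulrDl !mulrDr.
  set a := iota x * iota x; set b := iota y * iota y.
  set c := iota x * iota y; set d := iota y * iota x.
  rewrite addrACA (addrC a).
  have -> : d + a + (c + b) = c + d + a + b.
    by rewrite -!addrA (addrCA a c b) (addrCA d c).
  by rewrite (addrAC _ b) !addrK.
by rewrite E Hp scale0r.
Qed.

Lemma commZ (F : fieldType) (A : algType F) (x u : A) (a : F) :
  GRing.comm x u -> GRing.comm x (a *: u).
Proof. by rewrite /GRing.comm => H; rewrite -scalerAr -scalerAl H. Qed.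

Lemma comm_vec_even (F : fieldType) (V : vectType F) (q : V -> F) (A : unitAlgType F)
  (iota : {linear V -> A}) (V1 V2 : {vspace V}) x e :
  (forall z, iota z * iota z = (q z)%:A) ->
  (forall x y, x \in V1 -> y \in V2 -> polar q x y = 0) ->
  x \in V1 -> cl_even iota V2 e -> GRing.comm (iota x) e.
Proof.
move=> Hsq Hor Hx; elim => [|w1 w2 h1 h2|u v _ Hu _ Hv|a u _ Hu|u v _ Hu _ Hv].
- exact: commr1.
- have E1 := anticomm_orth Hsq (Hor _ _ Hx h1).
  have E2 := anticomm_orth Hsq (Hor _ _ Hx h2).
  by rewrite /GRing.comm mulrA E1 mulNr -mulrA E2 mulrN opprK mulrA.
- exact: commrD.
- exact: commZ.
- exact: commrM.
Qed.

Lemma comm_sub_even (F : fieldType) (V : vectType F) (q : V -> F) (A : unitAlgType F)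
  (iota : {linear V -> A}) (V1 V2 : {vspace V}) u e :
  (forall z, iota z * iota z = (q z)%:A) ->
  (forall x y, x \in V1 -> y \in V2 -> polar q x y = 0) ->
  cl_sub iota V1 u -> cl_even iota V2 e -> GRing.comm u e.
Proof.
move=> Hsq Hor Hu He; apply: commr_sym; elim: Hu.
- exact: commr1.
- by move=> w hw; apply: commr_sym; apply: comm_vec_even Hsq Hor hw He.
- by move=> ? ? _ ? _ ?; apply: commrD.
- by move=> ? ? _ ?; apply: commZ.
- by move=> ? ? _ ? _ ?; apply: commrM.
Qed.

Lemma tau_even (F : fieldType) (V : vectType F) (A : unitAlgType F)
  (iota : {linear V -> A}) (W : {vspace V}) tau e :
  is_reversal iota tau -> cl_even iota W e -> cl_even iota W (tau e).
Proof.
case=> Hlin H1 HM Hvec _.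
have tau0 : tau 0 = 0.
  have := Hlin 1 0 0; rewrite !scale1r addr0 => /esym/eqP.
  by move/eqP; rewrite -{3}[tau 0]add0r => /addIr.
have tauD u v : tau (u + v) = tau u + tau v.
  by have := Hlin 1 u v; rewrite !scale1r.
have tauZ a u : tau (a *: u) = a *: tau u.
  by have := Hlin a u 0; rewrite !addr0 tau0 addr0.
elim => [|w1 w2 h1 h2|u v _ Hu _ Hv|a u _ Hu|u v _ Hu _ Hv].
- rewrite H1; exact: ce1.
- by rewrite HM !Hvec; apply: ce2.
- by rewrite tauD; apply: ceD.
- by rewrite tauZ; apply: ceZ.
- by rewrite HM; apply: ceM.
Qed.

Lemma even_sub (F : fieldType) (V : vectType F) (A : unitAlgType F)
  (iota : {linear V -> A}) (W : {vspace V}) e :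
  cl_even iota W e -> cl_sub iota W e.
Proof.
elim => [|w1 w2 h1 h2|u v _ Hu _ Hv|a u _ Hu|u v _ Hu _ Hv].
- exact: cs1.
- by apply: csM; apply: csV.
- exact: csD.
- exact: csZ.
- exact: csM.
Qed.

Unset Implicit Arguments.
Theorem lemma5p2 (F : fieldType) (V : vectType F) (q : V -> F)
  (V1 V2 : {vspace V}) (A : unitAlgType F) (iota : {linear V -> A})
  (tau : A -> A) (t1 t2 s1 s2 : A) :
  (2%:R : F) != 0 ->
  quad_form q ->
  orth_direct_sum q V1 V2 ->
  nondeg_on q V1 -> nondeg_on q V2 ->
  is_clifford q iota ->
  is_reversal iota tau ->
  clifford_group_plus iota V1 t1 -> clifford_group_plus iota V2 t2 ->
  clifford_group iota V1 s1 -> clifford_group iota V2 s2 ->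
  s1 * t1 * s1^-1 = cl_norm tau t1 * t1^-1 ->
  s2 * t2 * s2^-1 = cl_norm tau t2 * t2^-1 ->
  (s1 * s2) * (t1 * t2) * (s1 * s2)^-1 = cl_norm tau (t1 * t2) * (t1 * t2)^-1.
Proof.
move=> _ _ [_ [_ Hor]] _ _ [Hsq _] Hrev [[St1 Ut1 _ _] Et1] [[St2 Ut2 _ _] Et2]
  [Ss1 Us1 Ss1i _] [Ss2 Us2 Ss2i _].
rewrite /cl_norm !mulrK //; last by rewrite unitrM_comm ?Ut1 //; apply: comm_sub_even Hsq Hor St1 Et2.
move=> E1 E2.
have Hor' : forall x y, x \in V2 -> y \in V1 -> polar q x y = 0.
  move=> x y hx hy; rewrite /polar -(Hor _ _ hy hx) /polar (addrC x).
  by rewrite -!addrA (addrC (- q x)).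
case: Hrev => Hl H1 HM Hv Hinv.
have Hrev : is_reversal iota tau by [].
have c_s2_t1 : GRing.comm s2 t1 := comm_sub_even Hsq Hor' Ss2 Et1.
have c_s1i_tt2 : GRing.comm s1^-1 (tau t2) :=
  comm_sub_even Hsq Hor Ss1i (tau_even Hrev Et2).
have c_tt1_tt2 : GRing.comm (tau t1) (tau t2).
  exact: comm_sub_even Hsq Hor (even_sub (tau_even Hrev Et1)) (tau_even Hrev Et2).
rewrite invrM // HM.
rewrite -!mulrA (mulrA s2 t1) c_s2_t1 -mulrA.
have -> : s2 * (t2 * (s2^-1 * s1^-1)) = tau t2 * s1^-1 by rewrite !mulrA E2.
by rewrite -c_s1i_tt2 !mulrA E1 c_tt1_tt2.
Qed.
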